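(* Let $p$ be prime, let $k\ge 2$ and $\ell\ge 1$ be integers, and let $\ell_{i_1}\le \ell_{i_2}\le\cdots\le\ell_{i_{k-1}}$ be positive integers. For $1\le m\le k-1$ let $y_{i_m}\in F_p[x]$ be given polynomials of degree less than $\ell_{i_m}$, pairwise distinct, and set $L_{i_m}=(\ell_{i_m}-1)(k-1)+\ell$. Let $s_0,s_1\in F_p[x]$ be two distinct polynomials of degree less than $\ell$, and let $z_{i_m}\in F_p[x]$ be given polynomials of degree less than $L_{i_m}$ ($1\le m\le k-1$). For $h\in\{0,1\}$ consider the system of congruences in the unknowns $(r_{h,0},\dots,r_{h,k-2})$, where each $r_{h,j}$ ranges over the polynomials in $F_p[x]$ of degree less than $L_{i_{k-1}}$: $$z_{i_m}\equiv \sum_{j=0}^{k-2} r_{h,j}\,y_{i_m}^{\,j}+s_h\,y_{i_m}^{\,k-1}\pmod{x^{L_{i_m}}},\qquad m=1,\dots,k-1.$$ Then the system for $h=0$ and the system for $h=1$ have the same number of solutions.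
   Context: $F_p[x]$ is the polynomial ring over the finite field $F_p$. Since $L_{i_1}\le\cdots\le L_{i_{k-1}}$, each congruence is well defined for unknowns taken modulo $x^{L_{i_{k-1}}}$. *)

(* Defs.v *)
From HB Require Import structures.
From mathcomp Require Import all_boot all_order all_algebra.
Set Implicit Arguments. Unset Strict Implicit. Unset Printing Implicit Defensive.
Import GRing.Theory.
Local Open Scope ring_scope.

(* L_{i_m} = (ell_{i_m} - 1)(k-1) + ell ; here m is 0-based (m < k-1). *)
Definition Lval (k l : nat) (ell_ : nat -> nat) (m : nat) : nat :=
  ((ell_ m).-1 * k.-1 + l)%N.

Definition poly_of_coefs (F : nzRingType) (n : nat) (c : {ffun 'I_n -> F}) : {poly F} :=
  \poly_(i < n) (if insub i is Some j then c j else 0).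

(* The system of congruences for a given s (= s_h) and unknowns
   r_j = poly_of_coefs (c j), j = 0..k-2, each of degree < Lmax:
     z_m = sum_j r_j y_m^j + s y_m^(k-1)   (mod x^(L_m)),  m = 0..k-2 *)
Definition solves (F : fieldType) (k : nat) (Lm : nat -> nat) (Lmax : nat)
  (y z : nat -> {poly F}) (s : {poly F}) (c : {ffun 'I_k.-1 -> {ffun 'I_Lmax -> F}}) : bool :=
  [forall m : 'I_k.-1,
     'X^(Lm m) %| (z m - (\sum_(j < k.-1) poly_of_coefs (c j) * (y m) ^+ j
                          + s * (y m) ^+ k.-1))].

(* Main.v *)
Require Import Defs.
From HB Require Import structures.
From mathcomp Require Import all_boot all_order all_algebra.
From mathcomp Require Import zify ring.
Set Implicit Arguments. Unset Strict Implicit. Unset Printing Implicit Defensive.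
Import GRing.Theory.
Local Open Scope ring_scope.

Section Gen.
Variables (F : finFieldType) (k Lmax : nat) (Lm : nat -> nat) (y z : nat -> {poly F}) (s0 s1 : {poly F}).
Hypothesis HL : forall m, (m < k.-1)%N -> (Lm m <= Lmax)%N.

Definition PP : {poly {poly F}} := \prod_(a <- map y (iota 0 k.-1)) ('X - a%:P).
Definition RR : {poly {poly F}} := 'X^(k.-1) - PP.

Lemma sizeRR : (size RR <= k.-1)%N.
Proof.
have hs : size PP = k.-1.+1 by rewrite size_prod_XsubC size_map size_iota.
apply/leq_sizeP => i Hi; rewrite coefB coefXn.
case: (ltngtP i k.-1) Hi => // [Hgt|->] _.
  by rewrite nth_default ?hs // subr0.
have := lead_coef_prod_XsubC (map y (iota 0 k.-1)) xpredT id.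
rewrite /lead_coef -/PP hs /= => ->; by rewrite subrr.
Qed.

Lemma RRy m : (m < k.-1)%N -> RR.[y m] = y m ^+ k.-1.
Proof.
move=> Hm; rewrite /RR hornerD hornerN hornerXn.
have /rootP -> : root PP (y m) by rewrite root_prod_XsubC map_f // mem_iota.
by rewrite subr0.
Qed.

Definition dd := s0 - s1.
Definition delta : {ffun 'I_k.-1 -> {ffun 'I_Lmax -> F}} :=
  [ffun j : 'I_k.-1 => [ffun i : 'I_Lmax => (dd * RR`_j)`_i]].
Definition shift (c : {ffun 'I_k.-1 -> {ffun 'I_Lmax -> F}}) : {ffun 'I_k.-1 -> {ffun 'I_Lmax -> F}} :=
  [ffun j => [ffun i => c j i + delta j i]].
Definition unshift (c : {ffun 'I_k.-1 -> {ffun 'I_Lmax -> F}}) : {ffun 'I_k.-1 -> {ffun 'I_Lmax -> F}} :=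
  [ffun j => [ffun i => c j i - delta j i]].

Lemma shiftK : cancel shift unshift.
Proof. by move=> c; apply/ffunP => j; apply/ffunP => i; rewrite !ffunE addrK. Qed.
Lemma unshiftK : cancel unshift shift.
Proof. by move=> c; apply/ffunP => j; apply/ffunP => i; rewrite !ffunE subrK. Qed.

Lemma pc_add n (a b : {ffun 'I_n -> F}) :
  poly_of_coefs [ffun i => a i + b i] = poly_of_coefs a + poly_of_coefs b.
Proof.
apply/polyP => i; rewrite coefD !coef_poly; case: ifP => _; last by rewrite addr0.
by case: insub => [j|]; rewrite ?ffunE ?addr0.
Qed.

Lemma pc_take (t : {poly F}) : poly_of_coefs [ffun i : 'I_Lmax => t`_i] = take_poly Lmax t.
Proof.
apply/polyP => i; rewrite coef_poly coef_take_poly; case: ltnP => Hi //.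
by rewrite insubT /= ffunE.
Qed.

Lemma key c : solves Lm y z s1 (shift c) = solves Lm y z s0 c.
Proof.
apply: eq_forallb => m.
set Y := y m.
have e : \sum_(j < k.-1) poly_of_coefs (shift c j) * Y ^+ j + s1 * Y ^+ k.-1
   = (\sum_(j < k.-1) poly_of_coefs (c j) * Y ^+ j + s0 * Y ^+ k.-1)
     - \sum_(j < k.-1) (drop_poly Lmax (dd * RR`_j) * 'X^Lmax) * Y ^+ j.
  have h1 : forall j, poly_of_coefs (shift c j) =
      poly_of_coefs (c j) + dd * RR`_j - drop_poly Lmax (dd * RR`_j) * 'X^Lmax.
    move=> j; rewrite ffunE pc_add ffunE pc_take -addrA; congr (_ + _).
    by rewrite -{2}(poly_take_drop Lmax (dd * RR`_j)) addrK.
  set D := dd in h1 *.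
  have h2 : \sum_(i < k.-1) D * RR`_i * Y ^+ i = D * Y ^+ k.-1.
    under eq_bigr do rewrite -mulrA.
    by rewrite -mulr_sumr -(horner_coef_wide _ sizeRR) RRy.
  have hD : D = s0 - s1 by [].
  clearbody D.
  under eq_bigr do rewrite h1 !mulrDl !mulNr.
  rewrite !big_split /= sumrN.
  rewrite h2 hD; ring.
rewrite e opprB addrCA addrC dvdp_addl //.
apply: (big_ind (fun q => 'X^(Lm m) %| q)); first exact: dvdp0.
  by move=> a b; apply: dvdp_add.
move=> j _; apply: dvdp_mulr; apply: dvdp_mull.
by apply: dvdp_exp2l; apply: HL.
Qed.

Lemma card_eq :
  #|[set c : {ffun 'I_k.-1 -> {ffun 'I_Lmax -> F}} | solves Lm y z s0 c]|
  = #|[set c : {ffun 'I_k.-1 -> {ffun 'I_Lmax -> F}} | solves Lm y z s1 c]|.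
Proof.
rewrite -(card_imset _ (can_inj shiftK)); apply: eq_card => c; rewrite [in RHS]inE; apply/imsetP/idP => [[c' H ->]|H].
  by rewrite key; move: H; rewrite inE.
by exists (unshift c); rewrite ?unshiftK // inE -key unshiftK.
Qed.
End Gen.

Theorem theorem4 (p : nat) (k l : nat) (ell_ : nat -> nat)
  (y z : nat -> {poly 'F_p}) (s0 s1 : {poly 'F_p}) :
  prime p -> (2 <= k)%N -> (1 <= l)%N ->
  (forall m, (m < k.-1)%N -> (0 < ell_ m)%N) ->
  (forall m1 m2, (m1 <= m2)%N -> (m2 < k.-1)%N -> (ell_ m1 <= ell_ m2)%N) ->
  (forall m, (m < k.-1)%N -> (size (y m) <= ell_ m)%N) ->
  (forall m1 m2, (m1 < k.-1)%N -> (m2 < k.-1)%N -> m1 <> m2 -> y m1 <> y m2) ->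
  (size s0 <= l)%N -> (size s1 <= l)%N -> s0 <> s1 ->
  (forall m, (m < k.-1)%N -> (size (z m) <= Lval k l ell_ m)%N) ->
  #|[set c : {ffun 'I_k.-1 -> {ffun 'I_(Lval k l ell_ k.-2) -> 'F_p}}
      | solves (Lval k l ell_) y z s0 c]|
  = #|[set c : {ffun 'I_k.-1 -> {ffun 'I_(Lval k l ell_ k.-2) -> 'F_p}}
      | solves (Lval k l ell_) y z s1 c]|.
Proof.
move=> _ Hk _ _ Hmon _ _ _ _ _ _.
apply: card_eq => m Hm.
have h1 : (m <= k.-2)%N by move: Hk Hm; clear; case: k => [|[|kk]].
have h2 : (k.-2 < k.-1)%N by move: Hk Hm; clear; case: k => [|[|kk]].
have H := Hmon m k.-2 h1 h2.
rewrite /Lval leq_add2r leq_mul2r; apply/orP; right.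
by move: H; clear; case: (ell_ m) => [|a]; case: (ell_ k.-2) => [|b].
Qed.
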